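(* Let $2 \le k \le n$ be integers. Then $$N(OM,k,n)=\begin{cases} \left\lceil \frac{n-1}{k-1} \right\rceil & \text{if } n \text{ is even},\\[2pt] \left\lceil \frac{n-2}{k-1} \right\rceil & \text{if } n \text{ is odd.}\end{cases}$$
   Context: We are given $n$ balls, namely the set $[n]=\{1,\dots,n\}$, each colored with one of two colors (say red and blue) by an unknown coloring. A ball $i$ is a majority ball if more than $n/2$ balls have the same color as $i$. A query is a subset $Q\subseteq[n]$ with $|Q|=k$. In the Output (Partition) Model (OM), the answer to a query $Q$ is the unordered partition $\{Q',Q''\}$ of $Q$ into the set of balls of one color and the set of balls of the other color (one part may be empty), with no indication of which color is which. A non-adaptive strategy is a family of queries $Q_1,\dots,Q_q$ fixed in advance (all asked simultaneously). It succeeds if for every coloring and every sequence of answers consistent with it, the answers determine the outcome: either every coloring consistent with these answers has no majority ball (and then we declare that there is none), or there is a ball that is a majority ball in every coloring consistent with these answers. $N(OM,k,n)$ denotes the minimum number $q$ of queries in a successful non-adaptive strategy in this model. *)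

(* Defs.v *)
From mathcomp Require Import all_boot.
Set Implicit Arguments. Unset Strict Implicit. Unset Printing Implicit Defensive.

Definition coloring (n : nat) := {ffun 'I_n -> bool}.

(* Answer of the Output (Partition) Model to query Q: the unordered partition
   of Q into its two color classes (a part may be empty), represented as the
   set of the two parts, with no indication of which color is which. *)
Definition answer (n : nat) (c : coloring n) (Q : {set 'I_n}) : {set {set 'I_n}} :=
  [set [set i in Q | c i]; [set i in Q | ~~ c i]].

Definition majority_ball (n : nat) (c : coloring n) (i : 'I_n) : bool :=
  n < 2 * #|[set j | c j == c i]|.

Definition consistent (n : nat) (qs : seq {set 'I_n}) (c c' : coloring n) : bool :=
  all (fun Q : {set 'I_n} => answer c' Q == answer c Q) qs.

Definition successful (n k : nat) (qs : seq {set 'I_n}) : Prop :=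
  all (fun Q : {set 'I_n} => #|Q| == k) qs /\
  forall c : coloring n,
    (forall c', consistent qs c c' -> forall i, ~~ majority_ball c' i) \/
    (exists i : 'I_n, forall c', consistent qs c c' -> majority_ball c' i).

Definition ceildiv (a b : nat) : nat := (a + b.-1) %/ b.

Definition N_OM_formula (k n : nat) : nat :=
  if ~~ odd n then ceildiv (n - 1) (k - 1) else ceildiv (n - 2) (k - 1).

(* Main.v *)
Require Import Defs.
From mathcomp Require Import all_boot.
From mathcomp Require Import zify.
Set Implicit Arguments. Unset Strict Implicit. Unset Printing Implicit Defensive.

Definition flip n (c : coloring n) (F : {set 'I_n}) : coloring n :=
  [ffun i => c i (+) (i \in F)].

Definition closed n (qs : seq {set 'I_n}) (F : {set 'I_n}) :=
  forall Q, Q \in qs -> forall x y, x \in Q -> y \in Q -> (x \in F) = (y \in F).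

Lemma answer_flip n (c : coloring n) (F Q : {set 'I_n}) :
  (forall x y, x \in Q -> y \in Q -> (x \in F) = (y \in F)) ->
  answer (flip c F) Q = answer c Q.
Proof.
move=> HF.
case: (set_0Vmem Q) => [->|[x0 Hx0]].
  by rewrite /answer; congr [set _; _]; apply/setP => i; rewrite !inE.
case Hb: (x0 \in F).
  have HH : forall i, i \in Q -> flip c F i = ~~ c i.
    by move=> i Hi; rewrite /flip ffunE (HF i x0 Hi Hx0) Hb addbT.
  rewrite /answer setUC; congr [set _; _]; apply/setP => i; rewrite !inE;
    case Hi: (i \in Q) => //=; rewrite HH // ?negbK //.
have HH : forall i, i \in Q -> flip c F i = c i.
  by move=> i Hi; rewrite /flip ffunE (HF i x0 Hi Hx0) Hb addbF.
rewrite /answer; congr [set _; _]; apply/setP => i; rewrite !inE;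
  case Hi: (i \in Q) => //=; rewrite HH //.
Qed.

Lemma closed_consistent n (qs : seq {set 'I_n}) (c : coloring n) (F : {set 'I_n}) :
  closed qs F -> consistent qs c (flip c F).
Proof. by move=> HF; apply/allP => Q HQ; apply/eqP; apply: answer_flip; exact: HF. Qed.

Lemma consistent_refl n (qs : seq {set 'I_n}) (c : coloring n) : consistent qs c c.
Proof. by apply/allP => Q _; rewrite eqxx. Qed.

Lemma labels n k (qs : seq {set 'I_n}) : 0 < k -> all (fun Q : {set 'I_n} => #|Q| == k) qs ->
  exists g : 'I_n -> 'I_n,
    (forall Q, Q \in qs -> forall x y, x \in Q -> y \in Q -> g x = g y) /\
    n <= #|g @: setT| + size qs * (k - 1).
Proof.
move=> k0; elim: qs => [|Q qs IH] /=.
  move=> _; exists id; split => //.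
  by rewrite card_imset ?cardsT ?card_ord ?addn0 //; exact: inj_id.
case/andP => /eqP HQ /IH [g [Hg Hn]].
have : 0 < #|Q| by rewrite HQ.
rewrite card_gt0 => /set0Pn [x0 Hx0].
pose h y := if y \in g @: Q then g x0 else y.
exists (fun x => h (g x)); split.
  move=> Q'; rewrite inE => /orP [/eqP -> | HQ'] x y Hx Hy.
    by rewrite /h !imset_f.
  by rewrite (Hg Q' HQ' x y Hx Hy).
set im := g @: setT.
have Hsub : g x0 |: (im :\: g @: Q) \subset (fun x => h (g x)) @: setT.
  apply/subsetP => y; rewrite !inE => /orP [/eqP -> | /andP [Hy1 Hy2]].
    by apply/imsetP; exists x0; rewrite ?inE // /h imset_f.
  case/imsetP: Hy2 => x _ Ey; subst y; apply/imsetP; exists x; rewrite ?inE //.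
  by rewrite /h (negbTE Hy1).
have := subset_leq_card Hsub.
rewrite cardsU1 !inE imset_f // cardsD /=.
have : #|im :&: g @: Q| <= k.
  by apply: leq_trans (subset_leq_card (subsetIr _ _)) _; rewrite -HQ leq_imset_card.
have := subset_leq_card (subsetIl im (g @: Q)).
move: Hn; rewrite -/im; rewrite mulSn.
clearbody h im. set H := #|[set h (g x) | x in _]|. set I := #|im :&: _|. set p := size qs * (k - 1). move: p => p. set J := #|im|. clearbody H I J. lia.
Qed.

Lemma pick_in (T : finType) (A : {set T}) : 0 < #|A| -> exists x, x \in A.
Proof. by rewrite card_gt0 => /set0Pn. Qed.

Lemma extend_set (T : finType) (G A : {set T}) m :
  G \subset A -> #|G| <= m <= #|A| ->
  exists R : {set T}, [/\ G \subset R, R \subset A & #|R| = m].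
Proof.
move=> GA; elim: m => [|m IH].
  by rewrite leqn0 => /andP [/eqP G0 _]; exists G; split.
move=> /andP [Hm1 Hm2].
case E: (#|G| == m.+1); first by exists G; split => //; apply/eqP.
have Hm : #|G| <= m by move/negbT: E; lia.
case: (IH _) => [|R [GR RA HR]]; first by rewrite Hm ltnW.
have : 0 < #|A :\: R| by rewrite cardsD (setIidPr RA) HR subn_gt0.
case/pick_in => x; rewrite inE => /andP [xR xA].
exists (x |: R); split.
- by apply: subset_trans GR (subsetUr _ _).
- by rewrite subUset sub1set xA.
- by rewrite cardsU1 xR HR.
Qed.

Lemma closedC n (qs : seq {set 'I_n}) F : closed qs F -> closed qs (~: F).
Proof. by move=> HF Q HQ x y Hx Hy; rewrite !inE (HF Q HQ x y Hx Hy). Qed.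

Lemma closed0 n (qs : seq {set 'I_n}) : closed qs set0.
Proof. by move=> Q HQ x y _ _; rewrite !inE. Qed.

Lemma closed_pre n (qs : seq {set 'I_n}) (g : 'I_n -> 'I_n) (P : pred 'I_n) :
  (forall Q, Q \in qs -> forall x y, x \in Q -> y \in Q -> g x = g y) ->
  closed qs [set x | P (g x)].
Proof. by move=> Hg Q HQ x y Hx Hy; rewrite !inE (Hg Q HQ x y Hx Hy). Qed.

Lemma even_fail n k (qs : seq {set 'I_n}) (G : {set 'I_n}) :
  ~~ odd n -> closed qs G -> 0 < #|G| -> 2 * #|G| <= n -> ~ successful k qs.
Proof.
move=> ev HG G0 G2 [_ Hs].
have Hn : n = n./2 + n./2 by move: (odd_double_half n); rewrite (negbTE ev) -addnn.
case: (@extend_set _ G setT n./2 (subsetT G)) => [|R [GR _ HR]].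
  by rewrite cardsT card_ord; apply/andP; split; lia.
case/pick_in: (G0) => i0 Hi0.
pose c : coloring n := [ffun i => i \in R].
case: (Hs c) => [H1 | [i H2]].
  have := H1 _ (closed_consistent c HG) i0.
  rewrite /majority_ball.
  have -> : [set j | flip c G j == flip c G i0] = ~: (R :\: G).
    apply/setP => j; rewrite !inE /flip !ffunE /= Hi0 (subsetP GR _ Hi0) /=.
    case Hj: (j \in G); first by rewrite (subsetP GR _ Hj).
    by case: (j \in R).
  rewrite -ltnNge.
  have := subset_leq_card GR; have := cardsC (R :\: G); rewrite card_ord cardsD (setIidPr GR) HR.
  set X := #|~: (R :\: G)|. clearbody X. lia.
have := H2 c (consistent_refl qs c); rewrite /majority_ball.
case Ci: (c i).
  have -> : [set j | c j == true] = R by apply/setP => j; rewrite !inE ffunE eqb_id.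
  rewrite HR; lia.
have -> : [set j | c j == false] = ~: R by apply/setP => j; rewrite !inE ffunE eqbF_neg.
have := cardsC R; rewrite card_ord HR; set X := #|~: R|; clearbody X; lia.
Qed.

Lemma odd_major n (c : coloring n) : odd n -> exists i, majority_ball c i.
Proof.
move=> od.
have Hn : n = n./2 + n./2 + 1 by move: (odd_double_half n); rewrite od -addnn; lia.
pose A := [set j | c j].
have := cardsC A; rewrite card_ord => HC.
case: (ltnP n (2 * #|A|)) => HA.
  have : 0 < #|A| by lia.
  case/pick_in => i; rewrite inE => Hi; exists i; rewrite /majority_ball.
  have -> : [set j | c j == c i] = A by apply/setP => j; rewrite !inE Hi eqb_id.
  exact: HA.
have : 0 < #|~: A| by lia.
case/pick_in => i; rewrite !inE => Hi; exists i; rewrite /majority_ball.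
have -> : [set j | c j == c i] = ~: A by apply/setP => j; rewrite !inE (negbTE Hi) eqbF_neg.
lia.
Qed.

Lemma odd_fail n k (qs : seq {set 'I_n}) (c : coloring n) : odd n ->
  (forall i, exists F, closed qs F /\ ~~ majority_ball (flip c F) i) ->
  ~ successful k qs.
Proof.
move=> od HF [_ Hs].
case: (Hs c) => [H1 | [i H2]].
  case: (odd_major c od) => i Hi.
  by have := H1 c (consistent_refl qs c) i; rewrite Hi.
case: (HF i) => F [CF NF].
by rewrite H2 in NF; last exact: closed_consistent.
Qed.

Lemma big_case n (qs : seq {set 'I_n}) (B1 B2 B3 : {set 'I_n}) : odd n ->
  closed qs B1 -> closed qs B2 -> closed qs B3 ->
  (forall j, j \in B1 -> j \notin B2) -> (forall j, j \in B1 -> j \notin B3) ->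
  (forall j, j \in B2 -> j \notin B3) ->
  (forall j, [|| j \in B1, j \in B2 | j \in B3]) ->
  0 < #|B1| -> 0 < #|B2| -> n < 2 * #|B3| ->
  exists c : coloring n, forall i, exists F, closed qs F /\ ~~ majority_ball (flip c F) i.
Proof.
move=> od C1 C2 C3 D12 D13 D23 cov N1 N2 big.
have Hn : n = n./2 + n./2 + 1 by move: (odd_double_half n); rewrite od -addnn; lia.
case: (@extend_set _ set0 B3 n./2 (sub0set B3)) => [|R [_ RB3 HR]].
  rewrite cards0 /=.
  move: big; set X := #|B3|; clearbody X; lia.
pose c : coloring n := [ffun i => i \in R].
exists c => i.
have side : forall Bx By : {set 'I_n}, closed qs By -> 0 < #|By| ->
    (forall j, j \in Bx -> j \notin By) -> (forall j, j \in Bx -> j \notin B3) ->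
    (forall j, j \in By -> j \notin B3) -> i \in Bx ->
    exists F, closed qs F /\ ~~ majority_ball (flip c F) i.
  move=> Bx By Cy Ny Dxy Dx3 Dy3 Hi.
  exists (~: By); split; first exact: closedC.
  have iR : i \notin R by apply/negP => /(subsetP RB3) ; rewrite (negbTE (Dx3 _ Hi)).
  rewrite /majority_ball.
  have -> : [set j | flip c (~: By) j == flip c (~: By) i] = ~: (R :|: By).
    apply/setP => j; rewrite !inE /flip !ffunE !inE /= (negbTE iR) (negbTE (Dxy _ Hi)) /=.
    case Hj: (j \in R); last by case: (j \in By).
    have : j \notin By by apply/negP => /Dy3; rewrite (subsetP RB3 _ Hj).
    by move/negbTE => ->.
  have HU := cardsUI R By.
  have E0 : R :&: By = set0.
    apply/setP => j; rewrite !inE; apply/negP => /andP [jR jB].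
    by have := Dy3 _ jB; rewrite (subsetP RB3 _ jR).
  rewrite E0 cards0 addn0 HR in HU.
  have := cardsC (R :|: By); rewrite card_ord HU.
  move: Ny; set X := #|~: (R :|: By)|; set Y := #|By|; clearbody X Y; lia.
case/or3P: (cov i) => Hi.
- by apply: (side B1 B2).
- apply: (side B2 B1 C1 N1 _ D23 D13 Hi).
  by move=> j H; apply/negP => /D12; rewrite H.
- case iR : (i \in R).
    exists set0; split; first exact: closed0.
    rewrite /majority_ball.
    have -> : [set j | flip c set0 j == flip c set0 i] = R.
      by apply/setP => j; rewrite !inE /flip !ffunE !inE /= !addbF iR eqb_id.
    rewrite HR; lia.
  exists (~: B3); split; first exact: closedC.
  rewrite /majority_ball.
  have -> : [set j | flip c (~: B3) j == flip c (~: B3) i] = B3 :\: R.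
    apply/setP => j; rewrite !inE /flip !ffunE !inE /= iR Hi /=.
    case Hj: (j \in R); first by rewrite (subsetP RB3 _ Hj).
    by case: (j \in B3).
  rewrite cardsD (setIidPr RB3) HR.
  case/pick_in: N1 => b1 Hb1.
  have : 0 < #|~: B3| by rewrite card_gt0; apply/set0Pn; exists b1; rewrite inE D13.
  have := cardsC B3; rewrite card_ord.
  move: big; set X := #|~: B3|; set Y := #|B3|; clearbody X Y; lia.
Qed.

Lemma small_case n (qs : seq {set 'I_n}) (B1 B2 B3 : {set 'I_n}) :
  closed qs B1 -> closed qs B2 -> closed qs B3 ->
  (forall j, [|| j \in B1, j \in B2 | j \in B3]) ->
  2 * #|B1| <= n -> 2 * #|B2| <= n -> 2 * #|B3| <= n ->
  exists c : coloring n, forall i, exists F, closed qs F /\ ~~ majority_ball (flip c F) i.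
Proof.
move=> C1 C2 C3 cov S1 S2 S3.
exists [ffun => false] => i.
have side : forall B, closed qs B -> 2 * #|B| <= n -> i \in B ->
    exists F, closed qs F /\ ~~ majority_ball (flip [ffun => false] F) i.
  move=> B CB SB Hi; exists B; split => //.
  rewrite /majority_ball.
  have -> : [set j | flip [ffun => false] B j == flip [ffun => false] B i] = B.
    by apply/setP => j; rewrite !inE /flip !ffunE /= Hi eqb_id.
  by rewrite -leqNgt.
by case/or3P: (cov i) => Hi; [apply: (side B1) | apply: (side B2) | apply: (side B3)].
Qed.

Lemma two_labels n (g : 'I_n -> 'I_n) (S : {set 'I_n}) : S = g @: setT ->
  forall s : seq 'I_n, size s < #|S| -> exists a, g a \notin s.
Proof.
move=> -> s Hm.
have : 0 < #|g @: setT :\: [set x in s]|.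
  rewrite cardsD.
  have : #|g @: setT :&: [set x in s]| <= size s.
    apply: leq_trans (subset_leq_card (subsetIr _ _)) _.
    apply: leq_trans (card_size s); by rewrite cardsE.
  move: Hm; set X := #|_ @: _|; set Y := #|_ :&: _|; clearbody X Y; lia.
case/pick_in => y; rewrite !inE => /andP [ys /imsetP [a _ Ey]]; subst y.
by exists a.
Qed.

Lemma lower n k (qs : seq {set 'I_n}) : 2 <= k -> k <= n -> successful k qs ->
  N_OM_formula k n <= size qs.
Proof.
move=> hk hkn Hs.
case: (@labels n k qs _ Hs.1) => [|g [Hg Hcard]]; first lia.
have CP : forall P : pred 'I_n, closed qs [set x | P (g x)] by move=> P; exact: closed_pre.
move: Hcard; set S := g @: setT => Hcard.
have ES : S = g @: setT by [].
rewrite /N_OM_formula /ceildiv.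
have k1 : 0 < k - 1 by lia.
case: ifP => ev.
  rewrite -ltnS ltn_divLR // ltnNge; apply/negP => Hle.
  have H2 : 1 < #|S|.
    move: Hle Hcard; rewrite mulSn; set P := size qs * (k - 1); clearbody P S; lia.
  have [a _] := two_labels ES (s := [::]) (ltnW H2).
  have [b] := two_labels ES (s := [:: g a]) H2.
  rewrite inE => Hb.
  pose G0 := [set x | g x == g a].
  have CG : closed qs G0 by exact: (CP (pred1 (g a))).
  have aG : a \in G0 by rewrite inE.
  have bG : b \notin G0 by rewrite inE.
  case: (leqP (2 * #|G0|) n) => HG.
    apply: (even_fail ev CG _ HG Hs).
    by rewrite card_gt0; apply/set0Pn; exists a.
  apply: (even_fail ev (closedC CG) _ _ Hs).
    by rewrite card_gt0; apply/set0Pn; exists b; rewrite inE.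
  have := cardsC G0; rewrite card_ord.
  move: HG; set X := #|~: G0|; set Y := #|G0|; clearbody X Y; lia.
have od : odd n by move/negbFE: ev.
rewrite -ltnS ltn_divLR // ltnNge; apply/negP => Hle.
have H3 : 2 < #|S|.
  move: Hle Hcard; rewrite mulSn; set P := size qs * (k - 1); clearbody P S; lia.
have [a _] := two_labels ES (s := [::]) (ltnW (ltnW H3)).
have [b] := two_labels ES (s := [:: g a]) (ltnW H3).
rewrite inE => Hb.
have [d] := two_labels ES (s := [:: g a; g b]) H3.
rewrite !inE negb_or => /andP [Hda Hdb].
pose B1 := [set x | g x == g a].
pose B2 := [set x | g x == g b].
pose B3 := [set x | (g x != g a) && (g x != g b)].
have C1 : closed qs B1 by exact: (CP (pred1 (g a))).
have C2 : closed qs B2 by exact: (CP (pred1 (g b))).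
have C3 : closed qs B3 by exact: (CP (fun y => (y != g a) && (y != g b))).
have N1 : 0 < #|B1| by rewrite card_gt0; apply/set0Pn; exists a; rewrite inE.
have N2 : 0 < #|B2| by rewrite card_gt0; apply/set0Pn; exists b; rewrite inE.
have N3 : 0 < #|B3| by rewrite card_gt0; apply/set0Pn; exists d; rewrite inE Hda Hdb.
have D12 : forall j, j \in B1 -> j \notin B2.
  by move=> j; rewrite !inE => /eqP ->; rewrite eq_sym.
have D21 : forall j, j \in B2 -> j \notin B1.
  by move=> j; rewrite !inE => /eqP ->.
have D13 : forall j, j \in B1 -> j \notin B3.
  by move=> j; rewrite !inE => /eqP ->; rewrite eqxx.
have D31 : forall j, j \in B3 -> j \notin B1.
  by move=> j; rewrite !inE => /andP [].
have D23 : forall j, j \in B2 -> j \notin B3.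
  by move=> j; rewrite !inE => /eqP ->; rewrite eqxx andbF.
have D32 : forall j, j \in B3 -> j \notin B2.
  by move=> j; rewrite !inE => /andP [].
have cov : forall j, [|| j \in B1, j \in B2 | j \in B3].
  by move=> j; rewrite !inE; case: (g j == g a); case: (g j == g b).
have [c Hc] : exists c : coloring n,
    forall i, exists F, closed qs F /\ ~~ majority_ball (flip c F) i.
  case: (ltnP n (2 * #|B3|)) => L3.
    exact: (big_case od C1 C2 C3 D12 D13 D23 cov N1 N2 L3).
  case: (ltnP n (2 * #|B1|)) => L1.
    apply: (big_case od C2 C3 C1 D23 D21 D31 _ N2 N3 L1).
    by move=> j; case/or3P: (cov j) => ->; rewrite ?orbT.
  case: (ltnP n (2 * #|B2|)) => L2.
    apply: (big_case od C3 C1 C2 D31 D32 D12 _ N3 N1 L2).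
    by move=> j; case/or3P: (cov j) => ->; rewrite ?orbT.
  exact: (small_case C1 C2 C3 cov L1 L2 L3).
exact: (odd_fail od Hc Hs).
Qed.

Lemma card_interval n a k : a + k <= n -> #|[set i : 'I_n | a <= i < a + k]| = k.
Proof.
move=> H.
have lt : forall t : 'I_k, a + t < n by move=> t; apply: leq_trans H; rewrite ltn_add2l.
pose f t := Ordinal (lt t).
have -> : [set i : 'I_n | a <= i < a + k] = f @: setT.
  apply/setP => i; rewrite !inE; apply/idP/imsetP.
    move=> /andP [H1 H2].
    have ltk : i - a < k by lia.
    exists (Ordinal ltk) => //; apply: val_inj => /=; lia.
  by case=> t _ ->; rewrite /= leq_addr ltn_add2l ltn_ord.
rewrite card_imset ?cardsT ?card_ord // => t1 t2 /(congr1 val) /= /eqP.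
by rewrite eqn_add2l => /eqP /val_inj.
Qed.

Lemma query_xor n (c c' : coloring n) (Q : {set 'I_n}) :
  answer c' Q = answer c Q ->
  forall x y, x \in Q -> y \in Q -> c' x (+) c x = c' y (+) c y.
Proof.
move=> E x y Hx Hy.
pose S' := [set i in Q | c' i == c' x].
have HS : S' \in answer c Q.
  rewrite -E /answer !inE; case Cx: (c' x); [apply/orP; left | apply/orP; right];
    apply/eqP/setP => i; rewrite !inE ?Cx ?eqb_id ?eqbF_neg //.
rewrite /answer !inE in HS; case/orP: HS => /eqP /setP HS;
  have := HS x; have := HS y; rewrite !inE Hx Hy eqxx /=;
  by case: (c' x); case: (c' y); case: (c x); case: (c y).
Qed.

Definition st n k j := minn (j * (k - 1)) (n - k).
Definition Qj n k j : {set 'I_n} := [set i : 'I_n | st n k j <= i < st n k j + k].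

Lemma chain n k q (c c' : coloring n) : 2 <= k -> k <= n ->
  consistent (mkseq (Qj n k) q) c c' ->
  forall j, j < q -> forall x y : 'I_n, x < st n k j + k -> y < st n k j + k ->
  c' x (+) c x = c' y (+) c y.
Proof.
move=> hk hkn Hc.
have HQ : forall j, j < q -> forall x y, x \in Qj n k j -> y \in Qj n k j ->
    c' x (+) c x = c' y (+) c y.
  move=> j jq; apply: query_xor; apply/eqP.
  move/allP: Hc; apply; apply/mapP; exists j => //; by rewrite mem_iota.
elim=> [|j IH] jq x y Hx Hy.
  by apply: (HQ 0 jq); rewrite inE; apply/andP; split; move: Hx Hy; rewrite /st; lia.
have sn : st n k j.+1 + k <= n by rewrite /st; lia.
have zlt : st n k j.+1 < n by move: sn; set P := st n k j.+1; clearbody P; lia.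
pose z := Ordinal zlt.
have Hz : z \in Qj n k j.+1 by rewrite inE /= leqnn /=; lia.
have s1 : st n k j.+1 <= st n k j + (k - 1).
  by rewrite /st mulSn; set P := j * (k - 1); clearbody P; lia.
have s2 : st n k j <= st n k j.+1.
  by rewrite /st mulSn; set P := j * (k - 1); clearbody P; lia.
have Hw : forall w : 'I_n, w < st n k j.+1 + k -> c' w (+) c w = c' z (+) c z.
  move=> w Hw; case: (ltnP w (st n k j + k)) => Lw.
    apply: IH => //; [exact: ltnW | rewrite /=; lia].
  by apply: (HQ _ jq) => //; rewrite inE; apply/andP; split => //; lia.
by rewrite (Hw x Hx) (Hw y Hy).
Qed.

Lemma upper n k : 2 <= k -> k <= n ->
  exists qs : seq {set 'I_n}, size qs = N_OM_formula k n /\ successful k qs.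
Proof.
move=> hk hkn.
have n3 : odd n -> 3 <= n.
  move=> o; have : n != 2 by apply/eqP => E; rewrite E in o.
  lia.
set q := N_OM_formula k n.
pose m := if ~~ odd n then n else n.-1.
have k1 : 0 < k - 1 by lia.
have m2 : 2 <= m by rewrite /m; case: ifP => ev; [lia | move/negbFE: ev => /n3; lia].
have mn : m <= n by rewrite /m; case: ifP => ev; lia.
have Hq : m - 1 <= q * (k - 1).
  have Eq : q = (m - 1 + (k - 1).-1) %/ (k - 1).
    by rewrite /q /N_OM_formula /ceildiv /m; case: ifP => _ //; congr (_ %/ _); lia.
  have := divn_eq (m - 1 + (k - 1).-1) (k - 1).
  have := ltn_pmod (m - 1 + (k - 1).-1) k1.
  rewrite -Eq.
  move: m2; set r := _ %% _; set P := q * (k - 1); clearbody r P m; lia.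
have q0 : 0 < q.
  have : 0 < q * (k - 1) by move: Hq m2; set P := q * (k - 1); clearbody P m; lia.
  by rewrite muln_gt0 => /andP [].
have cover : forall x : 'I_n, x < m -> x < st n k q.-1 + k.
  move=> x xm; rewrite /st.
  have E : q * (k - 1) = (k - 1) + q.-1 * (k - 1) by rewrite -mulSn prednK.
  move: Hq xm mn; rewrite E; set P := q.-1 * (k - 1); clearbody P m; lia.
exists (mkseq (Qj n k) q); split; first by rewrite size_mkseq.
split.
  apply/allP => Q /mapP [j _ ->]; rewrite card_interval //; rewrite /st; lia.
have key : forall c c', consistent (mkseq (Qj n k) q) c c' ->
    forall x y : 'I_n, x < m -> y < m -> c' x (+) c x = c' y (+) c y.
  move=> c c' Hc x y xm ym.
  apply: (chain hk hkn Hc (j := q.-1)); [by rewrite prednK | exact: cover | exact: cover].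
move=> c.
case ev: (odd n).
  have zlt : n.-1 < n by lia.
  pose z := Ordinal zlt.
  have neqz : forall x : 'I_n, x != z -> x < m.
    move=> x xz; rewrite /m ev /=.
    have : nat_of_ord x != n.-1 by apply/eqP => E; move/eqP: xz; apply; apply: val_inj.
    have := ltn_ord x; lia.
  have y0lt : 0 < n by lia.
  pose y0 := Ordinal y0lt.
  have y0z : y0 != z by apply/eqP => /(congr1 val) /=; lia.
  have cval : forall c', consistent (mkseq (Qj n k) q) c c' ->
      forall j, j != z -> c' j = c j (+) (c' y0 (+) c y0).
    move=> c' Hc j jz; have := key c c' Hc j y0 (neqz _ jz) (neqz _ y0z).
    by case: (c' j); case: (c j); case: (c' y0); case: (c y0).
  pose cnt b := #|[set j | (j != z) && (c j == b)]|.
  have tot : cnt true + cnt false = n.-1.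
    rewrite /cnt; have := cardsID [set j | c j] [set~ z]; rewrite cardsC1 card_ord => <-.
    by congr (_ + _); apply: eq_card => j; rewrite !inE; case: (c j); rewrite ?andbT ?andbF.
  have big : forall b, n < 2 * cnt b ->
      exists i, forall c', consistent (mkseq (Qj n k) q) c c' -> majority_ball c' i.
    move=> b Hb; have : 0 < cnt b by lia.
    case/pick_in => i; rewrite inE => /andP [iz /eqP ci].
    exists i => c' Hc; rewrite /majority_ball; apply: (leq_trans Hb).
    rewrite leq_mul2l /=; apply: subset_leq_card; apply/subsetP => j.
    rewrite !inE => /andP [jz /eqP cj].
    by rewrite (cval c' Hc j jz) (cval c' Hc i iz) cj ci.
  right.
  have nodd : n = n./2 + n./2 + 1 by move: (odd_double_half n); rewrite ev -addnn; lia.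
  case: (ltnP n (2 * cnt true)) => [/big // | Lt].
  case: (ltnP n (2 * cnt false)) => [/big // | Lf].
  exists z => c' Hc; rewrite /majority_ball.
  pose b' := c' z (+) (c' y0 (+) c y0).
  have sub : z |: [set j | (j != z) && (c j == b')] \subset [set j | c' j == c' z].
    apply/subsetP => j; rewrite !inE => /orP [/eqP -> // | /andP [jz /eqP cj]].
    by rewrite (cval c' Hc j jz) cj /b' addbK.
  have := subset_leq_card sub; rewrite cardsU1 !inE eqxx /=.
  have : cnt b' = n./2.
    case: (b'); move: tot Lt Lf nodd; set X := cnt true; set Y := cnt false;
      clearbody X Y; lia.
  rewrite /cnt; set X := #|[set j | (j != z) && (c j == b')]|; 
    set Y := #|[set j | c' j == c' z]|; clearbody X Y; lia.
have key2 : forall c', consistent (mkseq (Qj n k) q) c c' ->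
    forall i, majority_ball c' i = majority_ball c i.
  move=> c' Hc i; rewrite /majority_ball; congr (_ < 2 * _); apply: eq_card => j; rewrite !inE.
  have := key c c' Hc j i; rewrite /m ev /=; move/(_ (ltn_ord j) (ltn_ord i)).
  by case: (c' j); case: (c' i); case: (c j); case: (c i).
case: (boolP [exists i, majority_ball c i]) => [/existsP [i Hi] | /existsPn Hn].
  by right; exists i => c' Hc; rewrite key2.
by left => c' Hc i; rewrite key2.
Qed.

Theorem theorem5 (n k : nat) (hk : 2 <= k) (hkn : k <= n) :
  (exists qs : seq {set 'I_n}, size qs = N_OM_formula k n /\ successful k qs) /\
  (forall qs : seq {set 'I_n}, successful k qs -> N_OM_formula k n <= size qs).
Proof.
split; first exact: upper.
by move=> qs; apply: lower.
Qed.
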